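(* For every $n\ge 2$ and every Greene–Kleitman chain $C$ in $Q_n$ with $|C|\ge 2$, the chains $\ell( *C* )$ and $\ell( *f(C)* )$ are connected at their bottom ends in $Q_{n+2}$. Specifically, if $|C|=2$ and $C=u*v*w$ with $u,v,w\in D$, then $\ell( *C* )=*\,u\,*\,v\,0\,w\,1$ and $\ell( *f(C)* )=0\,u\,0\,v\,1\,w\,1$; and if $|C|\ge 3$ and $C=C'*u$ with $u\in D$ and $C'$ containing at least two $*$s, then $\ell( *C* )=*\,C'\,0\,u\,1$ and $\ell( *f(C)* )=*\,f(C')\,0\,u\,1$. Consequently, in the first case the chains $\ell( *C* )$ and $\ell( *f(C)* )$ differ in exactly three positions, and in the second case they differ in exactly two positions.
   Context: $Q_n$ is the hypercube on $\{0,1\}^n$. Let $D$ be the set of bitstrings (including the empty string) with equally many $0$s and $1$s such that every prefix has at least as many $0$s as $1$s. A Greene–Kleitman chain in $Q_n$ is a string of length $n$ over $\{0,1,*\}$ of the form $u_0*u_1*\cdots*u_{h-1}*u_h$ with all $u_j\in D$, representing the path whose vertices are obtained by replacing the $*$s by $i$ ones followed by $h-i$ zeros; $|C|=h$ is its number of $*$s, and its bottom end $b(C)$ is obtained by replacing all $*$s by $0$. For a string $C$ over $\{0,1,*\}$ with at least two $*$s, $f(C)$ (resp. $\ell(C)$) is obtained by replacing the first two (resp. last two) $*$s by $0$ and $1$, respectively. Juxtaposition denotes concatenation. Two chains are connected at their bottom ends if their bottom ends differ in exactly one position. *)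

(* Defs.v *)
From HB Require Import structures.
From mathcomp Require Import all_boot.
Set Implicit Arguments. Unset Strict Implicit. Unset Printing Implicit Defensive.

Inductive sym := S0 | S1 | Star.

Definition sym_eqb (a b : sym) : bool :=
  match a, b with
  | S0, S0 | S1, S1 | Star, Star => true
  | _, _ => false
  end.

Lemma sym_eqP : Equality.axiom sym_eqb.
Proof. by case; case; constructor. Qed.

HB.instance Definition _ := hasDecEq.Build sym sym_eqP.

Definition word := seq sym.

Definition n0 (s : word) := count (pred1 S0) s.
Definition n1 (s : word) := count (pred1 S1) s.
(* |C| : number of stars *)
Definition nstars (s : word) := count (pred1 Star) s.

Definition inD (s : word) : bool :=
  [&& all (fun c => c != Star) s, n0 s == n1 s &
      all (fun i => n1 (take i s) <= n0 (take i s)) (iota 0 (size s).+1)].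

Fixpoint star_join (u0 : word) (us : seq word) : word :=
  match us with
  | [::] => u0
  | u :: us' => u0 ++ Star :: star_join u us'
  end.

Definition GKchain (n : nat) (C : word) : Prop :=
  size C = n /\
  exists (u0 : word) (us : seq word),
    all inD (u0 :: us) /\ C = star_join u0 us.

Definition bottom (C : word) : word :=
  map (fun c => if c == Star then S0 else c) C.

Fixpoint repl_first_star (c : sym) (s : word) : word :=
  match s with
  | [::] => [::]
  | x :: s' => if x == Star then c :: s' else x :: repl_first_star c s'
  end.

Definition fC (C : word) : word := repl_first_star S1 (repl_first_star S0 C).

(* l(C): last two *s replaced by 0 and 1 respectively *)
Definition lC (C : word) : word :=
  rev (repl_first_star S0 (repl_first_star S1 (rev C))).

Definition hamming (s t : word) : nat := count (fun p => p.1 != p.2) (zip s t).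

Definition connected_bottom (C1 C2 : word) : Prop :=
  size C1 = size C2 /\ hamming (bottom C1) (bottom C2) = 1.

Definition starwrap (C : word) : word := Star :: rcons C Star.

(* Main.v *)
Require Import Defs.
From mathcomp Require Import all_boot.

Notation repl := repl_first_star.

Lemma nostarE s : all (fun c => c != Star) s = (Star \notin s).
Proof. by elim: s => [|x s IH] //=; rewrite in_cons IH negb_or eq_sym. Qed.

Lemma repl_nostar c s : Star \notin s -> repl c s = s.
Proof.
elim: s => [|x s IH] //=; rewrite in_cons negb_or => /andP[hx hs].
by rewrite eq_sym (negbTE hx) IH.
Qed.

Lemma repl_cat_nostar c s t : Star \notin s -> repl c (s ++ t) = s ++ repl c t.
Proof.
elim: s => [|x s IH] //=; rewrite in_cons negb_or => /andP[hx hs].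
by rewrite eq_sym (negbTE hx) IH.
Qed.

Lemma repl_cat_star c s t : Star \in s -> repl c (s ++ t) = repl c s ++ t.
Proof.
elim: s => [|x s IH] //=; rewrite in_cons.
by case: x => //= /IH ->.
Qed.

Lemma repl_rcons c s :
  repl c (rcons s Star) = if Star \in s then rcons (repl c s) Star else rcons s c.
Proof.
elim: s => [|x s IH] /=; first by [].
rewrite in_cons; case: x => //=; rewrite IH; by case: ifP.
Qed.

Lemma size_repl c s : size (repl c s) = size s.
Proof. by elim: s => [|x s IH] //=; case: ifP => //= _; rewrite IH. Qed.

Lemma mem_rev_star s : (Star \in rev s) = (Star \in s).
Proof. by rewrite mem_rev. Qed.

Lemma lC_wrap C : lC (starwrap C) =
  if Star \in C then Star :: rcons (rev (repl S0 (rev C))) S1 else S0 :: rcons C S1.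
Proof.
rewrite /lC /starwrap rev_cons rev_rcons /= repl_rcons mem_rev.
case: ifP => _; by rewrite rev_cons rev_rcons ?revK.
Qed.

Definition bot1 c := if c == Star then S0 else c.

Lemma bottom_repl0 s : bottom (repl S0 s) = bottom s.
Proof. by elim: s => [|x s IH] //=; case: x => //=; rewrite IH. Qed.

Lemma bottom_lC C : bottom (lC (starwrap C)) = S0 :: rcons (bottom C) S1.
Proof.
rewrite lC_wrap; case: ifP => _ //=; rewrite /bottom map_rcons /=; last by [].
by rewrite map_rev -/(bottom _) bottom_repl0 /bottom map_rev revK.
Qed.

Lemma hamming_cat a b a' b' : size a = size a' ->
  hamming (a ++ b) (a' ++ b') = hamming a a' + hamming b b'.
Proof. by move=> h; rewrite /hamming zip_cat // count_cat. Qed.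

Lemma hamming_refl s : hamming s s = 0.
Proof. by elim: s => [|x s IH] //=; rewrite /hamming /= eqxx /= -/(hamming _ _) IH. Qed.

Lemma hamming_cons x y s t : hamming (x :: s) (y :: t) = (x != y) + hamming s t.
Proof. by []. Qed.

Lemma hamming_bottom_repl1 X : hamming (bottom X) (bottom (repl S1 X)) = (Star \in X).
Proof.
elim: X => [|x X IH] //=; rewrite in_cons.
case: x => /=; rewrite hamming_cons ?hamming_refl //= IH //.
Qed.

Lemma count_repl c s : c != Star -> Star \in s -> nstars (repl c s) = (nstars s).-1.
Proof.
move=> hc; elim: s => [|x s IH] //=; rewrite in_cons.
case: x => /=; rewrite /nstars /= ?(negbTE hc) //= => /IH -> //.
Qed.

Lemma star_of_nstars s : 0 < nstars s -> Star \in s.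
Proof. by move=> h; rewrite -has_pred1 has_count. Qed.

Lemma hamming_repl c s : c != Star -> hamming s (repl c s) = (Star \in s).
Proof.
case: c => // _; elim: s => [|x s IH] //=; rewrite in_cons;
case: x => /=; rewrite hamming_cons ?hamming_refl ?IH //=.
Qed.

Lemma hamming_fC s : 2 <= nstars s -> hamming s (fC s) = 2.
Proof.
rewrite /fC; elim: s => [|x s IH] //=.
case: x => /=; rewrite /nstars /= => h; rewrite hamming_cons /= ?IH //.
by rewrite hamming_repl // star_of_nstars.
Qed.

Lemma size_fC s : size (fC s) = size s.
Proof. by rewrite /fC !size_repl. Qed.

Lemma nostar_inD u : inD u -> Star \notin u.
Proof. by case/and3P; rewrite nostarE. Qed.

Theorem lemma20 (n : nat) (C : word) :
  2 <= n -> GKchain n C -> 2 <= nstars C ->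
  [/\ size (lC (starwrap C)) = n.+2,
      size (lC (starwrap (fC C))) = n.+2,
      connected_bottom (lC (starwrap C)) (lC (starwrap (fC C))),
      (nstars C = 2 ->
        forall u v w : word, inD u -> inD v -> inD w ->
          C = u ++ Star :: v ++ Star :: w ->
          [/\ lC (starwrap C) = Star :: u ++ Star :: v ++ S0 :: w ++ [:: S1],
              lC (starwrap (fC C)) = S0 :: u ++ S0 :: v ++ S1 :: w ++ [:: S1]
            & hamming (lC (starwrap C)) (lC (starwrap (fC C))) = 3])
    & (3 <= nstars C ->
        forall (C' u : word), inD u -> 2 <= nstars C' ->
          C = C' ++ Star :: u ->
          [/\ lC (starwrap C) = Star :: C' ++ S0 :: u ++ [:: S1],
              lC (starwrap (fC C)) = Star :: fC C' ++ S0 :: u ++ [:: S1]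
            & hamming (lC (starwrap C)) (lC (starwrap (fC C))) = 2])].
Proof.
move=> _ [hsz _] hst.
have szl : forall X, size (lC (starwrap X)) = (size X).+2.
  by move=> X; rewrite /lC size_rev !size_repl size_rev /starwrap /= size_rcons.
have lastrepl : forall s t, Star \notin t ->
    rev (repl S0 (rev (s ++ Star :: t))) = s ++ S0 :: t.
  move=> s t ht; rewrite rev_cat rev_cons cat_rcons repl_cat_nostar; last by rewrite mem_rev.
  rewrite /=.
  by rewrite rev_cat rev_cons !revK cat_rcons.
split.
- by rewrite szl hsz.
- by rewrite szl size_fC hsz.
- split; first by rewrite !szl size_fC.
  rewrite !bottom_lC -cat1s -(cat1s S0 (rcons _ _)) hamming_cat //.
  rewrite -!cats1 hamming_cat; last by rewrite !size_map size_fC.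
  rewrite hamming_refl /fC -(bottom_repl0 C) hamming_bottom_repl1.
  by rewrite star_of_nstars // count_repl // ?star_of_nstars //; case: (nstars C) hst => [|[|k]].
- move=> _ u v w /nostar_inD hu /nostar_inD hv /nostar_inD hw ->.
  have e1 : lC (starwrap (u ++ Star :: v ++ Star :: w)) =
            Star :: u ++ Star :: v ++ S0 :: w ++ [:: S1].
    rewrite lC_wrap mem_cat in_cons eqxx orbT.
    rewrite (_ : u ++ Star :: v ++ Star :: w = (u ++ Star :: v) ++ Star :: w);
      last by rewrite -catA.
    by rewrite lastrepl // -cats1 -!catA.
  have efC : fC (u ++ Star :: v ++ Star :: w) = u ++ S0 :: v ++ S1 :: w.
    by rewrite /fC repl_cat_nostar //= repl_cat_nostar //= repl_cat_nostar.
  have e2 : lC (starwrap (fC (u ++ Star :: v ++ Star :: w))) =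
            S0 :: u ++ S0 :: v ++ S1 :: w ++ [:: S1].
    rewrite efC lC_wrap !(mem_cat, in_cons) /= (negbTE hu) (negbTE hv) (negbTE hw) /=.
    by rewrite rcons_cat /= rcons_cat /= cats1.
  split => //; rewrite e1 e2 hamming_cons /= hamming_cat // hamming_refl.
  by rewrite hamming_cons /= hamming_cat // hamming_refl hamming_cons /= hamming_refl.
- move=> _ C' u /nostar_inD hu h2 ->.
  have hC' : Star \in C' by apply: star_of_nstars; case: (nstars C') h2.
  have e1 : lC (starwrap (C' ++ Star :: u)) = Star :: C' ++ S0 :: u ++ [:: S1].
    rewrite lC_wrap mem_cat in_cons eqxx orbT lastrepl //.
    by rewrite -cats1 -!catA.
  have efC : fC (C' ++ Star :: u) = fC C' ++ Star :: u.
    rewrite /fC repl_cat_star // repl_cat_star //.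
    by apply: star_of_nstars; rewrite count_repl //; case: (nstars C') h2 => [|[|k]].
  have e2 : lC (starwrap (fC (C' ++ Star :: u))) = Star :: fC C' ++ S0 :: u ++ [:: S1].
    rewrite efC lC_wrap mem_cat in_cons eqxx orbT lastrepl //.
    by rewrite -cats1 -!catA.
  split => //; rewrite e1 e2 hamming_cons /= hamming_cat ?size_fC //.
  by rewrite hamming_fC // hamming_refl.
Qed.
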